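(* Let $k\in\{2,\dots,N\}$ and suppose $J_k\le k-1$. Then for every $j$ with $J_k\le j\le k-1$, $$j\cdot h^+_{j+1,k}\ \ge\ \sum_{j'=1}^{j}h^+_{j',k}.$$
   Context: Fix $N\in\mathbb{N}$. A function $f:[0,1]\to\mathbb{R}$ is inverse S-shaped if it is strictly increasing, continuously differentiable, and there is $x_0\in[0,1]$ such that $f'$ is strictly decreasing on $[0,x_0]$ and strictly increasing on $[x_0,1]$. Let $W^+:[0,1]\to[0,1]$ be inverse S-shaped with $W^+(0)=0$, $W^+(1)=1$. For $k\in\{1,\dots,N\}$ and $j\in\{1,\dots,k\}$ let $h^+_{j,k}:=W^+\!\left(\frac{k-j+1}{N}\right)-W^+\!\left(\frac{k-j}{N}\right)$, and let $J_k:=\min\{j\in\{1,\dots,k\}: j\,h^+_{j+1,k}\ge\sum_{j'=1}^{j}h^+_{j',k}\}$ with $h^+_{k+1,k}:=\infty$. *)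

(* Defs.v *)
From Stdlib Require Import Reals Lra.
Open Scope R_scope.

Definition has_deriv_on01 (f df : R -> R) : Prop :=
  forall x, 0 <= x <= 1 ->
    limit1_in (fun y => (f y - f x) / (y - x))
              (fun y => 0 <= y <= 1 /\ y <> x) (df x) x.

Definition continuous_on01 (g : R -> R) : Prop :=
  forall x, 0 <= x <= 1 -> limit1_in g (fun y => 0 <= y <= 1) (g x) x.

Definition inverse_S_shaped (f : R -> R) : Prop :=
  (forall x y, 0 <= x -> x < y -> y <= 1 -> f x < f y) /\
  exists df : R -> R,
    has_deriv_on01 f df /\ continuous_on01 df /\
    exists x0, 0 <= x0 <= 1 /\
      (forall x y, 0 <= x -> x < y -> y <= x0 -> df y < df x) /\
      (forall x y, x0 <= x -> x < y -> y <= 1 -> df x < df y).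

Definition hplus (W : R -> R) (N k j : nat) : R :=
  W ((INR k - INR j + 1) / INR N) - W ((INR k - INR j) / INR N).

Fixpoint sum1 (f : nat -> R) (j : nat) : R :=
  match j with
  | O => 0
  | S j' => sum1 f j' + f (S j')
  end.

(* The defining condition of J_k at j, with h^+_{k+1,k} := +infinity
   (so the condition holds automatically at j = k). *)
Definition Jcond (W : R -> R) (N k j : nat) : Prop :=
  j = k \/ INR j * hplus W N k (S j) >= sum1 (hplus W N k) j.

Definition is_Jk (W : R -> R) (N k J : nat) : Prop :=
  (1 <= J <= k)%nat /\ Jcond W N k J /\
  (forall j, (1 <= j < J)%nat -> ~ Jcond W N k j).

(* Main.v *)
Require Import Defs.
From Stdlib Require Import Reals Lra Lia.
Open Scope R_scope.

Lemma mvt_int (f f' : R -> R) (a b : R) : a < b ->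
  (forall c, a < c < b -> derivable_pt_lim f c (f' c)) ->
  (forall c, a <= c <= b -> continuity_pt f c) ->
  exists c, f b - f a = f' c * (b - a) /\ a < c < b.
Proof.
  intros H H0 H1.
  set (X0 := fun c (P : a < c < b) => exist (fun l => derivable_pt_abs f c l) (f' c) (H0 c P)
     : derivable_pt f c).
  assert (X2 : forall c, a < c < b -> derivable_pt id c) by (intros; apply derivable_pt_id).
  assert (H2 : forall c, a <= c <= b -> continuity_pt id c)
    by (intros; apply derivable_continuous_pt; apply derivable_pt_id).
  destruct (MVT f id a b X0 X2 H H1 H2) as [x [P H3]].
  exists x; split; [|exact P].
  assert (E1 : derive_pt id x (X2 x P) = 1) by (apply derive_pt_eq_0; apply derivable_pt_lim_id).
  assert (E2 : derive_pt f x (X0 x P) = f' x) by (apply derive_pt_eq_0; apply H0; exact P).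
  rewrite E1, E2 in H3; unfold id in H3. lra.
Qed.

Definition cl (x : R) := Rmax 0 (Rmin 1 x).

Lemma cl_in x : 0 <= cl x <= 1.
Proof. unfold cl, Rmax, Rmin; repeat destruct Rle_dec; lra. Qed.
Lemma cl_id x : 0 <= x <= 1 -> cl x = x.
Proof. intros; unfold cl, Rmax, Rmin; repeat destruct Rle_dec; lra. Qed.
Lemma cl_dist x c : 0 <= c <= 1 -> Rabs (cl x - c) <= Rabs (x - c).
Proof.
  intros; unfold cl, Rmax, Rmin; repeat destruct Rle_dec;
  unfold Rabs; repeat destruct Rcase_abs; lra.
Qed.

Lemma deriv_bound W df : has_deriv_on01 W df -> forall x, 0 <= x <= 1 ->
  exists alp, alp > 0 /\ forall y, 0 <= y <= 1 -> Rabs (y - x) < alp ->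
    Rabs (W y - W x) <= (Rabs (df x) + 1) * Rabs (y - x).
Proof.
  intros HD x Hx.
  destruct (HD x Hx 1 Rlt_0_1) as [alp [Ha Hb]].
  exists alp; split; [exact Ha|]. intros y Hy Hd.
  destruct (Req_dec y x) as [->|Hne].
  - replace (W x - W x) with 0 by ring. rewrite Rabs_R0.
    apply Rmult_le_pos; [pose proof (Rabs_pos (df x)); lra| apply Rabs_pos].
  - assert (K := Hb y (conj (conj Hy Hne) Hd)). simpl in K; unfold R_dist in K.
    assert (Hyx : y - x <> 0) by lra.
    replace (W y - W x) with ((W y - W x)/(y-x) * (y - x)) by (field; exact Hyx).
    rewrite Rabs_mult. apply Rmult_le_compat_r; [apply Rabs_pos|].
    pose proof (Rabs_triang_inv ((W y - W x)/(y-x)) (df x)). lra.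
Qed.

Section S.
Variables (W df : R -> R).
Hypothesis HD : has_deriv_on01 W df.
Definition Wc x := W (cl x).

Lemma Wc_cont c : 0 <= c <= 1 -> continuity_pt Wc c.
Proof.
  intros Hc. destruct (deriv_bound W df HD c Hc) as [alp [Ha Hb]].
  unfold continuity_pt, continue_in, limit1_in, limit_in, D_x, no_cond; simpl.
  intros eps He. set (M := Rabs (df c) + 1).
  assert (HM : 0 < M) by (unfold M; pose proof (Rabs_pos (df c)); lra).
  exists (Rmin alp (eps / M)). split.
  - apply Rmin_pos; [lra| apply Rdiv_lt_0_compat; lra].
  - intros x [_ Hx]. unfold R_dist in *. unfold Wc. rewrite (cl_id c Hc).
    pose proof (cl_dist x c Hc). pose proof (Rmin_l alp (eps/M)). pose proof (Rmin_r alp (eps/M)).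
    assert (Hb' := Hb (cl x) (cl_in x) ltac:(lra)).
    assert (M * Rabs (x - c) < M * (eps / M)) by (apply Rmult_lt_compat_l; lra).
    replace (M * (eps / M)) with eps in H2 by (field; lra).
    assert (M * Rabs (cl x - c) <= M * Rabs (x - c)) by (apply Rmult_le_compat_l; lra).
    fold M in Hb'. lra.
Qed.

Lemma Wc_der c : 0 < c < 1 -> derivable_pt_lim Wc c (df c).
Proof.
  intros Hc eps He.
  destruct (HD c ltac:(lra) eps He) as [alp [Ha Hb]].
  assert (Hp : 0 < Rmin alp (Rmin c (1 - c))) by (repeat apply Rmin_pos; lra).
  exists (mkposreal _ Hp). intros h Hh0 Hh. simpl in Hh.
  pose proof (Rmin_l alp (Rmin c (1-c))). pose proof (Rmin_r alp (Rmin c (1-c))).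
  pose proof (Rmin_l c (1-c)). pose proof (Rmin_r c (1-c)).
  assert (Hr : -h <= Rabs h /\ h <= Rabs h) by (split; [rewrite <- Rabs_Ropp|]; apply RRle_abs).
  assert (Hy : 0 <= c + h <= 1 /\ c + h <> c) by (split; [split|]; lra).
  assert (Hd : R_dist (c + h) c < alp) by (unfold R_dist; replace (c+h-c) with h by ring; lra).
  assert (K := Hb (c+h) (conj Hy Hd)). simpl in K; unfold R_dist in K.
  unfold Wc. rewrite (cl_id (c+h)) by lra. rewrite (cl_id c) by lra.
  replace (c + h - c) with h in K by ring. exact K.
Qed.

Lemma W_mvt u v : 0 <= u -> u < v -> v <= 1 ->
  exists c, u < c < v /\ W v - W u = df c * (v - u).
Proof.
  intros H1 H2 H3.
  destruct (mvt_int Wc df u v H2) as [c [E P]].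
  - intros c P; apply Wc_der; lra.
  - intros c P; apply Wc_cont; lra.
  - exists c; split; [exact P|]. unfold Wc in E. rewrite !cl_id in E by lra. exact E.
Qed.
End S.
Lemma triple W : inverse_S_shaped W -> forall a d, 0 <= a -> 0 < d -> a + 3*d <= 1 ->
  forall x1 x2 x3 x4, x1 = a -> x2 = a + d -> x3 = a + 2*d -> x4 = a + 3*d ->
  W x3 - W x2 < W x2 - W x1 \/ W x3 - W x2 < W x4 - W x3.
Proof.
  intros [_ [df [HD [_ [x0 [Hx0 [Hdec Hinc]]]]]]] a d Ha Hd H3 x1 x2 x3 x4 -> -> -> ->.
  destruct (W_mvt W df HD a (a+d)) as [e [Pe Ee]]; try lra.
  destruct (W_mvt W df HD (a+d) (a+2*d)) as [x [Px Ex]]; try lra.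
  destruct (W_mvt W df HD (a+2*d) (a+3*d)) as [z [Pz Ez]]; try lra.
  rewrite Ee, Ex, Ez.
  replace (a + d - a) with d by ring. replace (a + 2*d - (a+d)) with d by ring.
  replace (a + 3*d - (a+2*d)) with d by ring.
  destruct (Rle_dec x x0).
  - left. apply Rmult_lt_compat_r; [lra|]. apply Hdec; lra.
  - right. apply Rmult_lt_compat_r; [lra|]. apply Hinc; lra.
Qed.

Theorem lemma5 (N : nat) (W : R -> R)
  (HW : inverse_S_shaped W) (HWr : forall x, 0 <= x <= 1 -> 0 <= W x <= 1)
  (HW0 : W 0 = 0) (HW1 : W 1 = 1)
  (k : nat) (Hk : (2 <= k <= N)%nat)
  (J : nat) (HJ : is_Jk W N k J) (HJk : (J <= k - 1)%nat) :
  forall j : nat, (J <= j <= k - 1)%nat ->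
    INR j * hplus W N k (S j) >= sum1 (hplus W N k) j.
Proof.
  set (h := hplus W N k).
  assert (HN : 0 < INR N) by (apply lt_0_INR; lia).
  assert (T : forall i, (1 <= i)%nat -> (i + 2 <= k)%nat ->
            h (S i) < h (S (S i)) \/ h (S i) < h i).
  { intros i Hi1 Hi2. unfold h, hplus.
    assert (Hki : INR k >= INR i + 2).
    { replace 2 with (INR 2) by (simpl; ring). rewrite <- plus_INR. apply Rle_ge, le_INR; lia. }
    assert (Hi : INR i >= 1) by (apply Rle_ge; replace 1 with (INR 1) by reflexivity; apply le_INR; lia).
    assert (HkN : INR k <= INR N) by (apply le_INR; lia).
    destruct (triple W HW ((INR k - INR i - 2) / INR N) (1 / INR N)) with
      (x1 := (INR k - INR (S (S i))) / INR N) (x2 := (INR k - INR (S i)) / INR N)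
      (x3 := (INR k - INR i) / INR N) (x4 := (INR k - INR i + 1) / INR N) as [A|A].
    all: try (rewrite ?S_INR; field; lra).
    - apply Rmult_le_pos; [lra| left; apply Rinv_0_lt_compat; lra].
    - apply Rdiv_lt_0_compat; lra.
    - apply (Rmult_le_reg_r (INR N)); [lra|]. field_simplify; lra.
    - left. replace (INR k - INR (S (S i)) + 1) with (INR k - INR (S i)) by (rewrite !S_INR; ring).
      replace (INR k - INR (S i) + 1) with (INR k - INR i) by (rewrite !S_INR; ring). lra.
    - right. replace (INR k - INR (S i) + 1) with (INR k - INR i) by (rewrite !S_INR; ring). lra. }
  destruct HJ as [[HJ1 HJ2] [HJc _]].
  assert (Key : forall j, (1 <= j)%nat -> (S (S j) <= k)%nat ->
            h (S (S j)) < h (S j) -> sum1 h j > INR j * h (S j)).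
  { intros j Hj1 Hj2 Hlt.
    assert (Dec : forall t i, (i + t = S j)%nat -> (1 <= i)%nat -> h (S i) < h i).
    { induction t as [|t IH]; intros i Ei Hi.
      - replace i with (S j) by lia. exact Hlt.
      - assert (IHi := IH (S i) ltac:(lia) ltac:(lia)).
        destruct (T i Hi ltac:(lia)); lra. }
    assert (Gt : forall t i, (i + t = j)%nat -> (1 <= i)%nat -> h i > h (S j)).
    { induction t as [|t IH]; intros i Ei Hi.
      - replace i with j by lia. apply Rlt_gt, (Dec 1%nat); lia.
      - assert (IHi := IH (S i) ltac:(lia) ltac:(lia)).
        assert (h (S i) < h i) by (apply (Dec (S j - i)%nat); lia). lra. }
    assert (Sm : forall n, (1 <= n <= j)%nat -> sum1 h n > INR n * h (S j)).
    { induction n as [|n IH]; intros Hn; [lia|].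
      change (sum1 h (S n)) with (sum1 h n + h (S n)). rewrite S_INR.
      assert (G := Gt (j - S n)%nat (S n) ltac:(lia) ltac:(lia)).
      destruct n as [|n].
      + simpl. lra.
      + assert (IHn := IH ltac:(lia)). lra. }
    apply Sm; lia. }
  assert (Main : forall d, (J + d <= k - 1)%nat -> INR (J + d) * h (S (J + d)) >= sum1 h (J + d)).
  { induction d as [|d IH]; intros Hd.
    - rewrite Nat.add_0_r. destruct HJc as [E|E]; [lia| exact E].
    - replace (J + S d)%nat with (S (J + d)) by lia.
      set (j := (J + d)%nat) in *.
      assert (C := IH ltac:(lia)).
      change (sum1 h (S j)) with (sum1 h j + h (S j)). rewrite S_INR.
      destruct (Rlt_dec (h (S (S j))) (h (S j))) as [Hlt|Hge].
      + assert (K := Key j ltac:(lia) ltac:(lia) Hlt). lra.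
      + assert (0 <= INR j) by apply pos_INR.
        assert (0 <= (INR j + 1) * (h (S (S j)) - h (S j))) by (apply Rmult_le_pos; lra).
        lra. }
  intros j Hj. replace j with (J + (j - J))%nat by lia. apply Main. lia.
Qed.
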